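(* Let $n,m,k\ge 1$, let $S$ be a Boolean $n\times m$ matrix, and put $\bar n=n+2$, $\bar m=m+2$, $\bar k=k+2$. Let $\bar S$ be the Boolean $\bar n\times\bar m$ matrix whose first row is all ones, whose first column is all ones, whose entries $\bar s_{ij}$ with $i\ge 2$, $j=2$ or with $i=2$, $j\ge 2$ are $0$, and whose lower-right $n\times m$ block is $S$, i.e. $\bar s_{ij}=s_{i-2,j-2}$ for $i,j\ge 3$. Suppose there exist a Boolean $\bar n\times\bar k$ matrix $\bar E$ and a Boolean $\bar k\times\bar m$ matrix $\bar P$ with $\bar S=\bar E\cdot\bar P$. Then there also exist Boolean matrices $\bar E$ ($\bar n\times\bar k$) and $\bar P$ ($\bar k\times\bar m$) with $\bar S=\bar E\cdot\bar P$ which additionally satisfy: (i) the first row of $\bar E$ is all ones; (ii) the second row of $\bar E$ is $(1,0,\dots,0)$; (iii) $\bar e_{i2}=0$ for all $i\ge 3$; (iv) the first row of $\bar P$ is $(1,0,\dots,0)$; (v) the first column of $\bar P$ is all ones; (vi) $\bar p_{22}=1$.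
   Context: All matrices are over the Boolean algebra $(\{0,1\},\vee,\wedge)$. The Boolean matrix product of an $n\times k$ matrix $E=(e_{ia})$ and a $k\times m$ matrix $P=(p_{aj})$ is the $n\times m$ matrix $E\cdot P$ with entries $(E\cdot P)_{ij}=\bigvee_{a=1}^{k}(e_{ia}\wedge p_{aj})$. *)

(* Defs.v *)
(* Boolean matrices are 'M[bool]_(n, m). Indices are 0-based:
   paper's row/column 1 is index 0, row/column 2 is index 1. *)
From mathcomp Require Import all_boot all_algebra.
Set Implicit Arguments. Unset Strict Implicit. Unset Printing Implicit Defensive.

Definition bmul n k m (E : 'M[bool]_(n, k)) (P : 'M[bool]_(k, m)) : 'M[bool]_(n, m) :=
  \matrix_(i < n, j < m) [exists a : 'I_k, E i a && P a j].

(* The bordered matrix S-bar of size (n+2) x (m+2); 'I_(n.+2) is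
   convertible to 'I_(2 + n), and split decomposes an index into the first
   two indices (inl) or an index of the lower-right block S (inr). *)
Definition Sbar n m (S : 'M[bool]_(n, m)) : 'M[bool]_(n.+2, m.+2) :=
  \matrix_(i < n.+2, j < m.+2)
    if (i == 0 :> nat) || (j == 0 :> nat) then true
    else match @split 2 n i, @split 2 m j with
         | inr i', inr j' => S i' j'
         | _, _ => false
         end.

Definition ord1' {n : nat} : 'I_n.+2 := Ordinal (isT : 1 < n.+2).

(* Main.v *)
Require Import Defs.
From mathcomp Require Import all_boot all_algebra.
From mathcomp Require Import fingroup perm.
Set Implicit Arguments. Unset Strict Implicit. Unset Printing Implicit Defensive.

Theorem lemma1 (n m k : nat) (Hn : 1 <= n) (Hm : 1 <= m) (Hk : 1 <= k)
  (S : 'M[bool]_(n, m)) :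
  (exists (E : 'M[bool]_(n.+2, k.+2)) (P : 'M[bool]_(k.+2, m.+2)),
      Sbar S = bmul E P) ->
  exists (E : 'M[bool]_(n.+2, k.+2)) (P : 'M[bool]_(k.+2, m.+2)),
    Sbar S = bmul E P /\
    (forall a : 'I_k.+2, E ord0 a = true) /\
    (forall a : 'I_k.+2, E ord1' a = ((a : nat) == 0)) /\
    (forall i : 'I_n.+2, (2 <= i)%N -> E i ord1' = false) /\
    (forall j : 'I_m.+2, P ord0 j = ((j : nat) == 0)) /\
    (forall a : 'I_k.+2, P a ord0 = true) /\
    P ord1' ord1' = true.
Proof.
move=> [E [P H]].
have HS i j : Sbar S i j = [exists c, E i c && P c j] by rewrite H mxE.
have S0j j : Sbar S ord0 j = true by rewrite mxE.
have Si0 i : Sbar S i ord0 = true by rewrite mxE orbT.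
have S1j (j : 'I_m.+2) : Sbar S ord1' j = ((j : nat) == 0).
  rewrite mxE /=; case: eqP => //= Hj.
  by case: (@splitP 2 n ord1') => [x|x] //= e; move: e; rewrite /=; case: (nat_of_ord x).
have Si1 (i : 'I_n.+2) : Sbar S i ord1' = ((i : nat) == 0).
  rewrite mxE /= orbF; case: eqP => //= Hi.
  by case: (@splitP 2 n i) => [x|x] _; case: (@splitP 2 m ord1') => [y|y] //= e;
    move: e; case: (nat_of_ord y).
have := S0j ord1'; rewrite HS => /existsP [a /andP [E0a Pa1]].
have Ea (i : 'I_n.+2) : (i : nat) != 0 -> E i a = false.
  move=> Hi; apply/negbTE/negP => Eia.
  have := Si1 i; rewrite HS (negbTE Hi) => /existsP HH; apply: HH; exists a; by rewrite Eia.
have := Si0 ord1'; rewrite HS => /existsP [b /andP [E1b Pb0]].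
have Pb (j : 'I_m.+2) : (j : nat) != 0 -> P b j = false.
  move=> Hj; apply/negbTE/negP => Pbj.
  have := S1j j; rewrite HS (negbTE Hj) => /existsP HH; apply: HH; exists b; by rewrite Pbj E1b.
have ab : a != b.
  apply/eqP => eab; move: E1b; rewrite -eab Ea //.
pose s := tperm ord0 b.
pose a1 := s a.
have a10 : ord0 != a1.
  apply/eqP => e; move/eqP: ab; apply; rewrite -[a](tpermK ord0 b) -/s -/a1 -e.
  by rewrite /s tpermL.
pose t := tperm ord1' a1.
pose sg := (t * s)%g.
have a10' : a1 != ord0 by rewrite eq_sym.
have sg0 : sg ord0 = b by rewrite /sg permM /t tpermD // /s tpermL.
have sg1 : sg ord1' = a by rewrite /sg permM /t tpermL /a1 /s tpermK.
have key i j : [exists c, E i (sg c) && P (sg c) j] = [exists c, E i c && P c j].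
  apply/existsP/existsP => [[c h]|[c h]]; first by exists (sg c).
  by exists (sg^-1%g c); rewrite permKV.
pose E' := (\matrix_(i < n.+2, c < k.+2)
  (if (i : nat) == 0%N then true else if (i : nat) == 1%N then ((c : nat) == 0%N) else E i (sg c)))%R.
pose P' := (\matrix_(c < k.+2, j < m.+2)
  (if (j : nat) == 0%N then true else P (sg c) j))%R.
exists E', P'; split.
  apply/matrixP => i j; rewrite [RHS]mxE.
  case: (eqVneq (j : nat) 0) => Hj.
    have -> : j = ord0 by apply: val_inj.
    rewrite Si0; symmetry; apply/existsP.
    case: (eqVneq (i : nat) 0) => Hi.
      by exists ord0; rewrite !mxE Hi.
    case: (eqVneq (i : nat) 1) => Hi1.
      by exists ord0; rewrite !mxE Hi1.
    have := Si0 i; rewrite HS => /existsP [c /andP [Eic _]].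
    by exists (sg^-1%g c); rewrite !mxE (negbTE Hi) (negbTE Hi1) permKV Eic.
  case: (eqVneq (i : nat) 0) => Hi.
    have -> : i = ord0 by apply: val_inj.
    rewrite S0j; symmetry; apply/existsP.
    have := S0j j; rewrite HS => /existsP [c /andP [_ Pcj]].
    by exists (sg^-1%g c); rewrite !mxE (negbTE Hj) permKV Pcj.
  case: (eqVneq (i : nat) 1) => Hi1.
    have -> : i = ord1' by apply: val_inj.
    rewrite S1j (negbTE Hj); symmetry; apply/existsP => [[c]].
    rewrite !mxE /= (negbTE Hj).
    case: (eqVneq (c : nat) 0) => Hc //=.
    have -> : c = ord0 by apply: val_inj.
    by rewrite sg0 Pb.
  rewrite HS -key; apply: eq_existsb => c.
  by rewrite !mxE (negbTE Hi) (negbTE Hi1) (negbTE Hj).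
split; first by move=> c; rewrite mxE.
split; first by move=> c; rewrite mxE.
split.
  move=> i Hi; rewrite mxE.
  have Hi0 : (i : nat) != 0 by case: (nat_of_ord i) Hi.
  have Hi1 : (i : nat) != 1 by case: (nat_of_ord i) Hi => [|[]].
  by rewrite (negbTE Hi0) (negbTE Hi1) sg1 Ea.
split.
  move=> j; rewrite mxE; case: (eqVneq (j : nat) 0) => Hj //.
  by rewrite sg0 Pb.
split; first by move=> c; rewrite mxE.
by rewrite mxE /= sg1.
Qed.
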